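(* Let $r\ge1$, $n$ be integers and let $\sigma:\mathbb{Z}_n\to\{0,1\}$ be a weakly stable configuration. Then every block $[i,j]\in B(\sigma)$ has length $|[i,j]|\le r$.
   Context: Cells are elements of $\mathbb{Z}_n$, arithmetic mod $n$; $[a,b]$ denotes the cyclic interval $a,\dots,b$. The majority rule with radius $r$: $\mathrm{maj}_r(\sigma)(i)=0$ if among the cells of $[i-r,i+r]$ strictly more have value $0$ than $1$ under $\sigma$, and $=1$ otherwise. $\sigma$ is temporally periodic if $\mathrm{maj}_r(\mathrm{maj}_r(\sigma))=\sigma$. For $\beta\in\{0,1\}$, $B^\beta(\sigma)$ is the set of cell intervals $[i,j]$ with $\sigma(k)=\beta$ for all $k\in[i,j]$ and $\sigma(i-1)=\sigma(j+1)=1-\beta$; $B(\sigma)=B^0(\sigma)\cup B^1(\sigma)$. A configuration is strongly stable if every block in $B(\sigma)$ has length at least $r+1$ (equivalently, it has the form $(0^{r+1}0^*+1^{r+1}1^* )^*$), and weakly stable if it is temporally periodic and not strongly stable. *)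

(* Defs.v *)
From mathcomp Require Import all_boot all_order all_algebra.
Set Implicit Arguments. Unset Strict Implicit. Unset Printing Implicit Defensive.
Import GRing.Theory Num.Theory.

(* A configuration on Z_n: cells are 'I_n (identified with Z_n). *)
Definition config (n : nat) := 'I_n -> bool.

Definition cell (n : nat) (s : config n) (k : int) : bool :=
  match insub (absz (k %% (n : int))%Z) with
  | Some i => s i
  | None => false
  end.

Definition maj (n r : nat) (s : config n) : config n :=
  fun i =>
    let w := [seq cell s ((i : int) - (r : int) + (Posz t))%R | t : nat <- iota 0 (2 * r + 1)%N] in
    ~~ (count (fun b => ~~ b) w > count id w)%N.

Definition temporally_periodic (n r : nat) (s : config n) : Prop :=
  forall i, maj r (maj r s) i = s i.

Definition ilen (n : nat) (i j : 'I_n) : nat :=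
  (absz (((j : int) - (i : int)) %% (n : int))%Z).+1.

Definition is_block (n : nat) (s : config n) (beta : bool) (i j : 'I_n) : Prop :=
  (forall t, (t < ilen i j)%N -> cell s ((i : int) + (t : int))%R = beta) /\
  cell s ((i : int) - 1)%R = ~~ beta /\
  cell s ((j : int) + 1)%R = ~~ beta.

Definition in_B (n : nat) (s : config n) (i j : 'I_n) : Prop :=
  exists beta, is_block s beta i j.

Definition strongly_stable (n r : nat) (s : config n) : Prop :=
  forall i j : 'I_n, in_B s i j -> (r.+1 <= ilen i j)%N.

Definition weakly_stable (n r : nat) (s : config n) : Prop :=
  temporally_periodic r s /\ ~ strongly_stable r s.

(* Main.v *)
Require Import Defs.
From mathcomp Require Import all_boot all_order all_algebra.
From mathcomp Require Import zify.
From Stdlib Require Import Classical.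
Import GRing.Theory Num.Theory.

Lemma bneq (c b : bool) : c != b -> c = ~~ b. Proof. by case: c; case: b. Qed.
Lemma bnb (b : bool) : ~~ b = b -> False. Proof. by case: b. Qed.
Lemma bnn (c b : bool) : (c != b -> False) -> c = b. Proof. by case: c; case: b => // /(_ isT). Qed.

Section Aux.
Local Open Scope ring_scope.
Variables (n r : nat) (n_gt0 : (0 < n)%N).

Lemma cell_eqmod (s : config n) (a b : int) :
  (a %% n)%Z = (b %% n)%Z -> cell s a = cell s b.
Proof. by rewrite /cell => ->. Qed.

Lemma cell_ext (s1 s2 : config n) (a : int) :
  (forall i, s1 i = s2 i) -> cell s1 a = cell s2 a.
Proof. by move=> H; rewrite /cell; case: insubP => // i _ _; apply: H. Qed.

Definition win (s : config n) (x : int) :=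
  [seq cell s (x - (r : int) + (Posz t)) | t : nat <- iota 0 (2 * r + 1)].

Lemma cell_maj (s : config n) (x : int) :
  cell (maj r s) x = ~~ (count (fun b => ~~ b) (win s x) > count id (win s x))%N.
Proof.
rewrite /cell; case: insubP => [i _ Hi|].
  rewrite /maj /win.
  have -> : [seq cell s ((i : int) - (r : int) + (Posz t)) | t : nat <- iota 0 (2 * r + 1)]
          = [seq cell s (x - (r : int) + (Posz t)) | t : nat <- iota 0 (2 * r + 1)].
    apply: eq_map => t; apply: cell_eqmod; rewrite Hi.
    have h0 : (0 <= (x %% n)%Z) by lia.
    rewrite gez0_abs //.
    rewrite -[(_ - _ + _)%Z]addrA modzDml addrA //.
  by [].
move=> /negP []; lia.
Qed.

Lemma maj_count (w : seq bool) (b : bool) :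
  size w = (2 * r + 1)%N -> (r < count (fun c => c == b) w)%N ->
  ~~ (count (fun c => ~~ c) w > count id w)%N = b.
Proof.
move=> Hs Hc.
have E := count_predC id w.
have E2 : count (predC id) w = count (fun c => ~~ c) w by apply: eq_count.
case: b Hc => Hc.
  rewrite (@eq_count _ _ id) in Hc; last by case.
  move: Hc; rewrite -E2; lia.
rewrite (@eq_count _ _ (fun c => ~~ c)) in Hc; last by case.
move: Hc; rewrite -E2 => Hc; apply/negP; lia.
Qed.

Lemma count_iota_ge (P : pred nat) a m N :
  (a + m <= N)%N -> (forall t, (a <= t < a + m)%N -> P t) -> (m <= count P (iota 0 N))%N.
Proof.
move=> Hle H.
have -> : N = (a + (m + (N - a - m)))%N by lia.
rewrite !iotaD !count_cat.
have : count P (iota (0 + a) m) = m.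
  apply/eqP; rewrite -[X in _ == X](size_iota (0 + a) m) -all_count.
  by apply/allP => t; rewrite mem_iota => Ht; apply: H; lia.
lia.
Qed.

Lemma count_iota_ge2 (P : pred nat) t0 N :
  (r <= t0 < N)%N -> (forall t, (t < r)%N -> P t) -> P t0 -> (r < count P (iota 0 N))%N.
Proof.
move=> Ht0 H H0.
have -> : N = (r + (N - r))%N by lia.
rewrite iotaD count_cat.
have : count P (iota 0 r) = r.
  apply/eqP; rewrite -[X in _ == X](size_iota 0 r) -all_count.
  by apply/allP => t; rewrite mem_iota => Ht; apply: H; lia.
have : (0 < count P (iota (0 + r) (N - r)))%N.
  rewrite -has_count; apply/hasP; exists t0 => //; rewrite mem_iota; lia.
lia.
Qed.

Lemma run_fixed (c : config n) (q x : int) (b : bool) :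
  (forall t : int, 0 <= t <= (r : int) -> cell c (q + t) = b) ->
  q <= x <= q + (r : int) -> cell (maj r c) x = b.
Proof.
move=> H Hx; rewrite cell_maj; apply: maj_count.
  by rewrite size_map size_iota.
rewrite count_map.
have [a Ha] : exists a : nat, q - x + (r : int) = Posz a.
  exists (absz (q - x + (r : int))); lia.
apply: (@count_iota_ge _ a) => [|t Ht]; first lia.
rewrite /= -(H ((x - (r:int) + Posz t) - q)); last lia.
by apply/eqP; congr (cell _ _); lia.
Qed.

Definition P (s : config n) (x : int) :=
  exists q : int, q <= x <= q + (r : int) /\
    forall t : int, 0 <= t <= (r : int) -> cell s (q + t) = cell s x.

Lemma step (s : config n) (x : int) : temporally_periodic r s -> P s x -> P s (x + 1).
Proof.
move=> Hper [q [Hqx Hq]].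
move: (cell s x) Hq => b Hq.
have [Hlt|Heq] : x + 1 <= q + (r : int) \/ x = q + (r : int) by lia.
  exists q; split; first lia.
  move=> t Ht; rewrite Hq // -(Hq (x + 1 - q)); last lia.
  by congr (cell _ _); lia.
case Hb : (cell s (x + 1) == b).
  move/eqP: Hb => Hb.
  exists (q + 1); split; first lia.
  move=> t Ht; rewrite Hb.
  have [Ht1|Ht1] : t < (r : int) \/ t = (r : int) by lia.
    rewrite -(Hq (t + 1)); last lia.
    by congr (cell _ _); lia.
  by rewrite -Hb; congr (cell _ _); lia.
have Hnb : cell s (x + 1) = ~~ b by move/negbT: Hb; apply: bneq.
case: (classic (forall t : int, 0 <= t <= (r : int) -> cell s (x + 1 + t) = ~~ b)) => Hall.
  exists (x + 1); split; first lia.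
  by move=> t Ht; rewrite Hall // Hnb.
apply: False_ind.
have [t1 Ht1] : exists t1 : int, ~ (0 <= t1 <= (r : int) -> cell s (x + 1 + t1) = ~~ b).
  by apply: not_all_ex_not.
have [Ht1r Ht1b] : 0 <= t1 <= (r : int) /\ cell s (x + 1 + t1) = b.
  split.
    by apply: NNPP => hh; apply: Ht1 => hh'; case: (hh hh').
  apply: bnn => E; apply: Ht1 => _; exact: bneq.
have Ht1pos : 0 < t1.
  have : t1 != 0.
    apply/eqP => Z; move: Ht1b; rewrite Z addr0 Hnb; exact: bnb.
  lia.
have Htau1 : cell (maj r s) (x + 1) = b.
  rewrite cell_maj; apply: maj_count; first by rewrite size_map size_iota.
  rewrite count_map.
  have [a Ha] : exists a : nat, t1 = Posz a by exists (absz t1); lia.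
  apply: (@count_iota_ge2 _ (r + a)%N); first lia.
    move=> t Ht /=; rewrite -(Hq (Posz t + 1)); last lia.
    by apply/eqP; congr (cell _ _); lia.
  by rewrite /= -Ht1b; apply/eqP; congr (cell _ _); lia.
have Htau : forall t : int, 0 <= t <= (r : int) -> cell (maj r s) (q + 1 + t) = b.
  move=> t Ht.
  have [Ht1'|Ht1'] : t < (r : int) \/ t = (r : int) by lia.
    apply: (@run_fixed _ q).
 2: lia. exact Hq.
  by rewrite -Htau1; congr (cell _ _); lia.
have := @run_fixed _ (q + 1) (x + 1) b Htau ltac:(lia).
rewrite (@cell_ext _ s _ Hper) Hnb; exact: bnb.
Qed.

End Aux.

Lemma cell_shift (n : nat) (s : config n) (x y c : int) :
  (x %% n = y %% n)%Z -> cell s (x + c)%R = cell s (y + c)%R.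
Proof. by move=> H; apply: cell_eqmod; rewrite -modzDml H modzDml. Qed.

Theorem corollary1 (r n : nat) (s : config n) :
  (1 <= r)%N -> weakly_stable r s ->
  forall i j : 'I_n, in_B s i j -> (ilen i j <= r)%N.
Proof.
move=> Hr [Hper Hns] i j [beta [Hc [Hl Hrr]]].
have n_gt0 : (0 < n)%N by have := ltn_ord i; lia.
rewrite leqNgt; apply/negP => Hlong.
have [i0 Hi0] := not_all_ex_not _ _ Hns.
have [j0 Hj0] := not_all_ex_not _ _ Hi0.
have [[beta0 [Hc0 [Hl0 Hr0]]] Hshort] := imply_to_and _ _ Hj0.
have Hshort' : (ilen i0 j0 <= r)%N by rewrite leqNgt; apply/negP.
have Pi : @P n r s i.
  exists i; split; first lia.
  move=> t Ht.
  have -> : cell s i = beta by rewrite -(Hc 0%N) //; congr (cell _ _); lia.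
  rewrite -(Hc (absz t)); last lia.
  congr (cell _ _); lia.
have Pk : forall k : nat, @P n r s ((i : int) + (k : int))%R.
  elim=> [|k IH]; first by rewrite GRing.addr0.
  have -> : ((i : int) + (k.+1 : int) = ((i : int) + (k : int)) + 1)%R by lia.
  exact: (@step n r n_gt0 s _ Hper IH).
set x := ((i : int) + (absz (((i0 : int) - (i : int)) %% (n : int))%Z : int))%R.
have Hx : (x %% n = (i0 : int) %% n)%Z.
  rewrite /x gez0_abs; last by apply: modz_ge0; lia.
  by rewrite modzDmr; congr (_ %% _)%Z; lia.
have [q [Hqx Hq]] := Pk (absz (((i0 : int) - (i : int)) %% (n : int))%Z).
rewrite -/x in Hqx Hq.
have Hcx : cell s x = beta0.
  rewrite -(GRing.addr0 x) (@cell_shift _ s _ _ _ Hx) -(Hc0 0%N) //; lia.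
have [Hlt|Heq] : (q <= x - 1 \/ q = x)%R by lia.
  have := Hq (x - 1 - q)%R ltac:(lia).
  rewrite Hcx.
  have -> : (q + (x - 1 - q) = x + (-1))%R by lia.
  rewrite (@cell_shift _ s _ _ _ Hx) Hl0; exact: bnb.
have := Hq (ilen i0 j0 : int) ltac:(lia).
rewrite Hcx Heq (@cell_shift _ s _ _ _ Hx).
have -> : cell s ((i0 : int) + (ilen i0 j0 : int))%R = cell s ((j0 : int) + 1)%R.
  apply: cell_eqmod.
  have Hm : ((0:int) <= (((j0 : int) - (i0 : int))%R %% n)%Z)%R by apply: modz_ge0; lia.
  have -> : ((i0:int) + (ilen i0 j0 : int) = ((((j0:int) - (i0:int))%R %% n)%Z) + ((i0:int) + 1))%R.
    rewrite /ilen; lia.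
  by rewrite modzDml; congr (_ %% _)%Z; lia.
rewrite Hr0; exact: bnb.
Qed.
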